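(* Let $p$ be an odd prime, $\mathbb{F}$ a field of characteristic $p$, and $a,s$ natural numbers with $a<p$. For every set partition $\delta$ of $\{1,\ldots,as\}$ into $s$ sets of size $a$, there exists $g\in N_{S_{asp}}(R_{as})$ such that $K_\delta\cong\mathbb{F}\uparrow_{E_s^g}^C$ as $\mathbb{F}C$-modules.
   Context: For $j\geq1$ let $z_j=(p(j-1)+1,\ldots,pj)$ and $\mathcal{O}_j=\{p(j-1)+1,\ldots,pj\}$; $\sigma=z_1\cdots z_{as}$, $R_{as}=\langle\sigma\rangle$, $C=\langle z_1\rangle\times\cdots\times\langle z_{as}\rangle$. For $j\in\{1,\ldots,s\}$ let $\pi_j=z_jz_{j+s}z_{j+2s}\cdots z_{j+(a-1)s}$ and $E_s=\langle\pi_1\rangle\times\cdots\times\langle\pi_s\rangle\leq C$. $H^{(a^{sp})}$ is the $\mathbb{F}S_{asp}$-permutation module on set partitions of $\{1,\ldots,asp\}$ into $sp$ sets of size $a$; its Brauer quotient $H^{(a^{sp})}(R_{as})$ is identified with the span of the set partitions fixed by $R_{as}$. A fixed set partition $\omega$ has type $\delta=\{\delta_1,\ldots,\delta_s\}$ if there are sets $A_1,\ldots,A_s$ with $|A_i\cap\mathcal{O}_j|=1$ if $j\in\delta_i$ and $0$ otherwise, and $\omega=\{A_i\sigma^k:1\leq i\leq s,0\leq k\leq p-1\}$; $K_\delta$ is the $\mathbb{F}C$-submodule spanned by fixed set partitions of type $\delta$. *)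

(* Defs.v *)
From mathcomp Require Import all_boot all_order all_algebra all_fingroup.
Set Implicit Arguments. Unset Strict Implicit. Unset Printing Implicit Defensive.
Import GRing.Theory.

(* Points {1,...,asp} are encoded as pairs (j, k) : 'I_(a*s) * 'I_p,
   the pair (j,k) standing for the point p*j + k + 1.  Hence the orbit
   O_{j+1} = {p j + 1, ..., p (j+1)} is [set x | x.1 == j], and the cycle
   z_{j+1} maps (j,k) to (j, k+1 mod p).  Indices j of z_j, O_j are 0-based. *)
Notation pt a s p := ('I_(a * s) * 'I_p)%type.

Section Defs.
Variables a s p : nat.

Definition zfun (j : nat) (x : pt a s p) : pt a s p :=
  if x.1 == j :> nat then (x.1, ordS x.2) else x.

Lemma zfun_inj j : injective (zfun j).
Proof.
move=> [x1 x2] [y1 y2]; rewrite /zfun /=.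
case: ifP => hx; case: ifP => hy => E;
  have /= e1 := congr1 fst E; have /= e2 := congr1 snd E; subst.
- by rewrite (ordS_inj e2).
- by rewrite hx in hy.
- by rewrite hy in hx.
- by [].
Qed.

Definition zcyc (j : nat) : {perm pt a s p} := perm (@zfun_inj j).

Definition orb (j : nat) : {set pt a s p} := [set x : pt a s p | x.1 == j :> nat].

Definition sigma : {perm pt a s p} := (\prod_(j < a * s) zcyc j)%g.

Definition Rgrp : {group {perm pt a s p}} := <[sigma]>%G.

(* C = <z_1> x ... x <z_{as}> (internal product = generated subgroup) *)
Definition Cgrp : {group {perm pt a s p}} :=
  <<\bigcup_(j < a * s) <[zcyc j]> >>%G.

Definition piel (j : nat) : {perm pt a s p} := (\prod_(i < a) zcyc (j + i * s))%g.

Definition Egrp : {group {perm pt a s p}} :=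
  <<\bigcup_(j < s) <[piel j]> >>%G.

Definition spact (g : {perm pt a s p}) (w : {set {set pt a s p}}) :
  {set {set pt a s p}} := (fun B : {set pt a s p} => [set g x | x in B]) @: w.

Definition is_setpart_pts (w : {set {set pt a s p}}) : bool :=
  [&& partition w [set: pt a s p], #|w| == s * p & [forall B in w, #|B| == a]].

Definition is_setpart_idx (d : {set {set 'I_(a * s)}}) : bool :=
  [&& partition d [set: 'I_(a * s)], #|d| == s & [forall D in d, #|D| == a]].

Definition fixedR (w : {set {set pt a s p}}) : bool := spact sigma w == w.

Definition has_type (d : {set {set 'I_(a * s)}}) (w : {set {set pt a s p}}) : bool :=
  [exists A : {ffun {set 'I_(a * s)} -> {set pt a s p}},
    [forall D in d, forall j : 'I_(a * s), #|A D :&: orb j| == (j \in D)]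
    && (w == (fun (D : {set 'I_(a * s)}) (k : 'I_p) => [set (sigma ^+ k)%g x | x in A D])
               @2: (d, [set: 'I_p]))].

(* the basis of K_delta: fixed set partitions of shape (a^{sp}) and type d *)
Definition Kbasis (d : {set {set 'I_(a * s)}}) : {set {set {set pt a s p}}} :=
  [set w | [&& is_setpart_pts w, fixedR w & has_type d w]].
End Defs.

Section PermMod.
Variable F : fieldType.
Local Open Scope ring_scope.

(* matrix (row-vector convention) of the permutation f of a finite set S,
   in the basis indexed by S: e_u * M = e_{f u} *)
Definition permmx (T : finType) (S : {set T}) (f : T -> T) : 'M[F]_#|S| :=
  \matrix_(i, j) ((f (enum_val i) == enum_val j)%:R)%R.

Definition Krep a s p (d : {set {set 'I_(a * s)}}) (g : {perm pt a s p}) :=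
  permmx (Kbasis p d) (spact g).

(* F induced from H up to G (trivial module F of H):
   F (x)_{FH} FG, with basis 1 (x) t, t running over right cosets Ht;
   g acts by Ht |-> Htg *)
Definition indtriv (gT : finGroupType) (H G : {set gT}) (g : gT) :=
  permmx (rcosets H G) (fun X => X :* g)%g.

(* isomorphism of FG-modules given by matrix representations
   (same as mathcomp's mx_rsim, without requiring representation proofs) *)
Definition rep_iso (gT : finGroupType) (G : {set gT}) n1 n2
  (r1 : gT -> 'M[F]_n1) (r2 : gT -> 'M[F]_n2) : Prop :=
  n1 = n2 /\ exists B : 'M[F]_(n1, n2),
    row_free B /\ forall x, x \in G -> r1 x *m B = B *m r2 x.
End PermMod.

(* Main.v *)
Require Import Defs.
From mathcomp Require Import all_boot all_order all_algebra all_fingroup zify.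
Set Implicit Arguments. Unset Strict Implicit. Unset Printing Implicit Defensive.
Import GRing.Theory.
Section G1.
Local Open Scope ring_scope.

Lemma sum_pick (F : fieldType) (T : finType) (S : {pred T}) (k0 : 'I_#|S|)
  (Fk : 'I_#|S| -> F) a :
  enum_val k0 = a -> (\sum_k ((a == enum_val k)%:R * Fk k) = Fk k0)%R.
Proof.
move=> <-; rewrite (bigD1 k0) //= eqxx mul1r big1 ?addr0 // => k nk.
by rewrite (inj_eq enum_val_inj) eq_sym (negbTE nk) mul0r.
Qed.

Lemma orbit_rep_iso (F : fieldType) (gT : finGroupType) (T : finType)
  (G H : {group gT}) (S : {set T}) (act : gT -> T -> T) (u0 : T) :
  H \subset G ->
  (forall g x, g \in G -> x \in G -> act x (act g u0) = act (g * x)%g u0) ->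
  (forall h, h \in H -> act h u0 = u0) ->
  (forall g, g \in G -> act g u0 = u0 -> g \in H) ->
  S = [set act g u0 | g in G] ->
  rep_iso G (fun x => permmx F S (act x))
            (fun x => permmx F (rcosets H G) (fun X => X :* x)%g).
Proof.
move=> sHG Hact Hfix Hstab defS.
pose psi := fun X : {set gT} => act (repr X) u0.
have psiE g : g \in G -> psi (H :* g)%g = act g u0.
  move=> Gg; rewrite /psi.
  have /rcosetP[h Hh ->] : repr (H :* g)%g \in (H :* g)%g.
    exact: (mem_repr g (rcoset_refl H g)).
  by rewrite -Hact ?Gg ?(subsetP sHG _ Hh) // Hfix.
have psi_inj : {in rcosets H G &, injective psi}.
  move=> X Y /rcosetsP[g Gg ->] /rcosetsP[g' Gg' ->].
  rewrite !psiE // => E.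
  apply/rcoset_eqP/rcosetP; exists (g * g'^-1)%g; last by rewrite mulgKV.
  apply: Hstab; first by rewrite groupM ?groupV.
  by rewrite -Hact ?groupV // E Hact ?groupV // mulgV Hfix.
have psiS : psi @: rcosets H G = S.
  rewrite defS; apply/setP => u; apply/imsetP/imsetP.
    by case=> X /rcosetsP[g Gg ->] ->; exists g; rewrite ?psiE.
  by case=> g Gg ->; exists (H :* g)%g; rewrite ?psiE //; apply/rcosetsP; exists g.
have cardS : #|S| = #|rcosets H G| by rewrite -psiS card_in_imset.
have closedT X x : X \in rcosets H G -> x \in G ->
    ((X :* x)%g \in rcosets H G) /\ psi (X :* x)%g = act x (psi X).
  move=> /rcosetsP[g Gg ->] Gx; rewrite -rcosetM psiE ?groupM // psiE //.
  split; last by rewrite Hact.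
  by apply/rcosetsP; exists (g * x)%g; rewrite ?groupM.
have psiT u : u \in S -> exists2 X, X \in rcosets H G & psi X = u.
  by rewrite -psiS => /imsetP[X TX ->]; exists X.
have enumT X : X \in rcosets H G -> exists k : 'I_#|rcosets H G|, enum_val k = X.
  by move=> TX; exists (enum_rank_in TX X); rewrite enum_rankK_in.
have enumS u : u \in S -> exists k : 'I_#|S|, enum_val k = u.
  by move=> Su; exists (enum_rank_in Su u); rewrite enum_rankK_in.
split => //.
pose B : 'M[F]_(#|S|, #|rcosets H G|) :=
  \matrix_(i, j) ((enum_val i == psi (enum_val j))%:R)%R.
exists B; split.
  apply/row_freeP; exists B^T%R; apply/matrixP => i i'; rewrite !mxE.
  have [X TX psiX] := psiT _ (enum_valP i).
  have [k0 k0E] := enumT _ TX.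
  under eq_bigr => k _ do rewrite !mxE -psiX (inj_in_eq psi_inj TX (enum_valP k)).
  rewrite (sum_pick _ k0E) k0E psiX.
  by rewrite (inj_eq enum_val_inj) eq_sym.
move=> x Gx; apply/matrixP => i j; rewrite !mxE.
have Sx : act x (enum_val i) \in S.
  have [X TX <-] := psiT _ (enum_valP i).
  have [TXx <-] := closedT X x TX Gx.
  by rewrite -psiS imset_f.
have [k1 k1E] := enumS _ Sx.
under eq_bigr => k _ do rewrite !mxE.
rewrite (sum_pick _ k1E).
have [X TX psiX] := psiT _ (enum_valP i).
have [k0 k0E] := enumT _ TX.
under [RHS]eq_bigr => k _ do rewrite !mxE -psiX (inj_in_eq psi_inj TX (enum_valP k)).
rewrite (sum_pick _ k0E) k1E k0E -psiX.
have [TXx <-] := closedT X x TX Gx.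
by rewrite (inj_in_eq psi_inj TXx (enum_valP j)).
Qed.
End G1.

Section Rot.
Variables a s p : nat.
Local Notation n := (a * s).
Local Notation P := (pt a s p).

Lemma ord_gt0 m (i : 'I_m) : 0 < m.
Proof. exact: leq_ltn_trans (leq0n i) (ltn_ord i). Qed.

Definition rotfun (e : 'I_n -> nat) (x : P) : P :=
  (x.1, Ordinal (ltn_pmod (x.2 + e x.1) (ord_gt0 x.2))).

Lemma rotfun_inj e : injective (rotfun e).
Proof.
move=> [x1 x2] [y1 y2] [E1 E2]; subst y1; congr pair; apply/val_inj => /=.
move/eqP: E2; rewrite eqn_modDr !modn_small //; by move/eqP.
Qed.

Definition rotate e : {perm P} := perm (@rotfun_inj e).

Lemma rotateE e x : rotate e x = rotfun e x.
Proof. by rewrite permE. Qed.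

Lemma rotate1 e x : (rotate e x).1 = x.1.
Proof. by rewrite rotateE. Qed.

Lemma rotate2 e x : val (rotate e x).2 = (x.2 + e x.1) %% p.
Proof. by rewrite rotateE. Qed.

Lemma rot_eq e f : (forall j, e j = f j %[mod p]) -> rotate e = rotate f.
Proof.
move=> H; apply/permP => -[x1 x2]; rewrite !rotateE; congr pair.
by apply/val_inj => /=; rewrite -modnDmr H modnDmr.
Qed.

Lemma rot_ext e f : (forall j, e j = f j) -> rotate e = rotate f.
Proof. by move=> H; apply: rot_eq => j; rewrite H. Qed.

Lemma rotM e f : (rotate e * rotate f)%g = rotate (fun j => e j + f j).
Proof.
apply/permP => -[x1 x2]; rewrite permM !rotateE; congr pair.
by apply/val_inj => /=; rewrite modnDml addnA.
Qed.

Lemma rot0 : rotate (fun _ => 0) = 1%g.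
Proof.
apply/permP => -[x1 x2]; rewrite perm1 rotateE; congr pair.
by apply/val_inj => /=; rewrite addn0 modn_small.
Qed.

Lemma rot_prod (I : Type) (r : seq I) (Pr : pred I) (Fi : I -> 'I_n -> nat) :
  (\prod_(i <- r | Pr i) rotate (Fi i))%g = rotate (fun j => \sum_(i <- r | Pr i) Fi i j).
Proof.
elim: r => [|i r IH].
  by rewrite big_nil -rot0; apply: rot_ext => j; rewrite big_nil.
rewrite big_cons IH; case: ifP => Pi.
  by rewrite rotM; apply: rot_ext => j; rewrite big_cons Pi.
by apply: rot_ext => j; rewrite big_cons Pi.
Qed.

Lemma rotX e m : (rotate e ^+ m)%g = rotate (fun j => e j * m).
Proof.
elim: m => [|m IH]; first by rewrite expg0 -rot0; apply: rot_ext => j; rewrite muln0.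
by rewrite expgS IH rotM; apply: rot_ext => j; rewrite mulnS.
Qed.

Lemma zcycE (j : nat) : zcyc a s p j = rotate (fun i => (i == j :> nat)).
Proof.
apply/permP => -[x1 x2]; rewrite permE rotateE /zfun /=.
case H: (x1 == j :> nat); congr pair; apply/val_inj => //=.
all: rewrite H ?addn1 ?addn0 // modn_small //.
Qed.

Lemma sigmaE : sigma a s p = rotate (fun _ => 1).
Proof.
rewrite /sigma; under eq_bigr => j _ do rewrite zcycE.
rewrite rot_prod; apply: rot_ext => i.
rewrite (bigD1 i) //= eqxx big1 // => j /negbTE; rewrite eq_sym => H.
by case: eqP => // E; move/negbT: H; rewrite (_ : i = j) ?eqxx //; apply: val_inj.
Qed.

Lemma sigmaX (k : nat) : (sigma a s p ^+ k)%g = rotate (fun _ => k).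
Proof. by rewrite sigmaE rotX; apply: rot_ext => j; rewrite mul1n. Qed.

Lemma pielE (j : nat) :
  piel a s p j = rotate (fun i => \sum_(t < a) (i == j + t * s :> nat)).
Proof. by rewrite /piel; under eq_bigr => t _ do rewrite zcycE; rewrite rot_prod. Qed.

Lemma rot_inC e : rotate e \in Cgrp a s p.
Proof.
have -> : rotate e = (\prod_(j < n) (zcyc a s p j ^+ e j))%g.
  under eq_bigr => j _ do rewrite zcycE rotX.
  rewrite rot_prod; apply: rot_ext => i.
  rewrite (bigD1 i) //= eqxx mul1n big1 ?addn0 // => j /negbTE H.
  case: eqP => [E|]; last by rewrite mul0n.
  by move: H; rewrite (_ : i = j) ?eqxx //; apply: val_inj.
apply: group_prod => j _; apply: groupX; apply: mem_gen.
by apply/bigcupP; exists j => //; exact: cycle_id.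
Qed.

Lemma prod_rot m (c : 'I_m -> {perm P}) :
  (forall i, exists e, c i = rotate e) -> exists e, (\prod_i c i)%g = rotate e.
Proof.
elim: m c => [|m IH] c Hc.
  by exists (fun _ => 0); rewrite big_ord0 rot0.
have [e1 E1] := IH (fun i => c (widen_ord (leqnSn m) i)) (fun i => Hc _).
have [e2 E2] := Hc ord_max.
by exists (fun j => e1 j + e2 j); rewrite big_ord_recr /= E1 E2 rotM.
Qed.

Lemma inC_rot g : g \in Cgrp a s p -> exists e, g = rotate e.
Proof.
case/gen_prodgP => m [c Hc ->]; apply: prod_rot => i.
have /bigcupP[j _ /cycleP[k ->]] := Hc i.
by rewrite zcycE rotX; eexists.
Qed.
End Rot.
Section Part.
Variables (a s p : nat) (hp : 0 < p) (d : {set {set 'I_(a * s)}}).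
Variable dP : is_setpart_idx d.
Local Notation n := (a * s).
Local Notation P := (pt a s p).

Lemma dpart : partition d [set: 'I_n].
Proof. by case/and3P: dP. Qed.

Lemma dtriv : trivIset d.
Proof. by case/and3P: dpart. Qed.

Lemma dcov y : y \in cover d.
Proof. by case/and3P: dpart => /eqP-> _ _; rewrite inE. Qed.

Lemma d0 : set0 \notin d.
Proof. by case/and3P: dpart. Qed.

Lemma dcard : #|d| = s.
Proof. by case/and3P: dP => _ /eqP. Qed.

Lemma dDcard D : D \in d -> #|D| = a.
Proof. by case/and3P: dP => _ _ /forall_inP H /H /eqP. Qed.

Lemma dne D : D \in d -> exists y, y \in D.
Proof.
move=> Dd; case: (set_0Vmem D) => [E|[y yD]]; last by exists y.
by move: d0; rewrite -E Dd.
Qed.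

Definition pb y := pblock d y.
Lemma pb_mem y : pb y \in d. Proof. exact: pblock_mem (dcov y). Qed.
Lemma pb_in y : y \in pb y. Proof. by rewrite /pb mem_pblock dcov. Qed.
Lemma pbE D y : D \in d -> y \in D -> pb y = D.
Proof. exact: def_pblock dtriv. Qed.

Definition blk y := index (pb y) (enum d).
Definition pos y := index y (enum (pb y)).

Lemma blk_lt y : blk y < s.
Proof. by have := index_mem (pb y) (enum d); rewrite mem_enum pb_mem -cardE dcard. Qed.

Lemma pos_lt y : pos y < a.
Proof.
by have := index_mem y (enum (pb y)); rewrite mem_enum pb_in -cardE (dDcard (pb_mem y)).
Qed.

Lemma tau_lt y : blk y + pos y * s < n.
Proof.
have := blk_lt y; have := pos_lt y.
move=> h1 h2; nia.
Qed.

Lemma divmod_eq (b j x t : nat) : b < s -> j < s ->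
  (b + x * s == j + t * s) = (b == j) && (x == t).
Proof.
move=> bs js; have s0 : 0 < s by apply: leq_ltn_trans bs.
have H1 y z : y < s -> (y + z * s) %% s = y by move=> ys; rewrite addnC modnMDl modn_small.
have H2 y z : y < s -> (y + z * s) %/ s = z.
  by move=> ys; rewrite addnC divnMDl // divn_small ?addn0.
apply/eqP/andP => [E | [/eqP-> /eqP->] //]; split; apply/eqP.
  by rewrite -(H1 b x) // E H1.
by rewrite -(H2 b x) // E H2.
Qed.

Definition tauf y : 'I_n := Ordinal (tau_lt y).

Lemma tau_inj : injective tauf.
Proof.
move=> y y' /(congr1 val) /= /eqP; rewrite divmod_eq ?blk_lt // => /andP[/eqP E1 /eqP E2].
have Epb : pb y = pb y'.
  by rewrite -(nth_index set0 (_ : pb y \in enum d)) ?mem_enum ?pb_mem // -/(blk y) E1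
     nth_index // mem_enum pb_mem.
rewrite -(nth_index y (_ : y \in enum (pb y))) ?mem_enum ?pb_in // -/(pos y) E2 Epb.
by rewrite nth_index // mem_enum pb_in.
Qed.

Definition Gfun (x : P) : P := (tauf x.1, x.2).
Lemma Gfun_inj : injective Gfun.
Proof.
move=> [x1 x2] [y1 y2] E; have /= E1 := congr1 fst E; have /= E2 := congr1 snd E.
by rewrite (tau_inj E1) E2.
Qed.
Definition Gt : {perm P} := perm Gfun_inj.
Definition gg : {perm P} := (Gt^-1)%g.

Lemma rot_conj e : (rotate p e ^ gg)%g = rotate p (fun y => e (tauf y)).
Proof.
apply/permP => x; rewrite /gg conjgE invgK !permM.
rewrite -[RHS](permK Gt); congr (_ _).
by rewrite !rotateE /Gt !permE /Gfun /rotfun /=; congr pair; apply: val_inj.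
Qed.

Lemma gg_norm : gg \in 'N(Rgrp a s p)%g.
Proof.
apply/normP; rewrite /Rgrp /= -cycleJ sigmaE rot_conj.
by congr (<[_]>)%g; apply: rot_ext.
Qed.

Lemma sum_blk y (j : nat) : j < s ->
  \sum_(t < a) (tauf y == j + t * s :> nat) = (blk y == j).
Proof.
move=> js /=.
under eq_bigr => t _ do rewrite divmod_eq ?blk_lt //.
case: eqP => _ /=; last by rewrite big1.
rewrite (bigD1 (Ordinal (pos_lt y))) //= eqxx big1 // => t /negbTE H.
by apply/eqP; rewrite eqb0; apply: contraFN H => /eqP E; apply/eqP/val_inj.
Qed.

Lemma piel_conj (j : nat) : j < s ->
  (piel a s p j ^ gg)%g = rotate p (fun y => (blk y == j)).
Proof.
by move=> js; rewrite pielE rot_conj; apply: rot_ext => y; rewrite sum_blk.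
Qed.

Lemma blk_pb y y' : blk y = blk y' -> pb y = pb y'.
Proof.
move=> E; rewrite -(nth_index set0 (_ : pb y \in enum d)) ?mem_enum ?pb_mem //.
by rewrite -/(blk y) E nth_index // mem_enum pb_mem.
Qed.
End Part.
Section Part3.
Variables (a s p : nat) (hp : 0 < p) (d : {set {set 'I_(a * s)}}).
Variable dP : is_setpart_idx d.
Local Notation n := (a * s).
Local Notation P := (pt a s p).

Definition Bk (e : 'I_n -> nat) (D : {set 'I_n}) (k : 'I_p) : {set P} :=
  [set x : P | (x.1 \in D) && (val x.2 == (k + e x.1) %% p)].
Definition W e : {set {set P}} := [set Bk e D k | D in d, k in [set: 'I_p]].
Definition pj (e : 'I_n -> nat) (k : nat) (j : 'I_n) : P :=
  (j, Ordinal (ltn_pmod (k + e j) hp)).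

Lemma pj_in e (D : {set 'I_n}) (k : 'I_p) j : j \in D -> pj e k j \in Bk e D k.
Proof. by move=> jD; rewrite inE /= jD eqxx. Qed.

Lemma Bk_img e (D : {set 'I_n}) k : Bk e D k = [set pj e k j | j in D].
Proof.
apply/setP => -[x1 x2]; rewrite inE /=; apply/andP/imsetP.
  by case=> xD /eqP E; exists x1 => //; congr pair; apply: val_inj.
by case=> j jD [-> ->] /=.
Qed.

Lemma Bk_card e (D : {set 'I_n}) k : D \in d -> #|Bk e D k| = a.
Proof.
move=> Dd; rewrite Bk_img card_imset ?(dDcard dP Dd) //.
by move=> j j' /(congr1 fst).
Qed.

Lemma Bk_eq e f (D : {set 'I_n}) (k k' : 'I_p) : (forall j, j \in D -> k + e j = k' + f j %[mod p]) ->
  Bk e D k = Bk f D k'.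
Proof.
move=> H; apply/setP => x; rewrite !inE.
by case xD: (x.1 \in D) => //=; rewrite H.
Qed.

Lemma rot_Bk e f D k :
  [set rotate p f x | x in Bk e D k] = Bk (fun j => e j + f j) D k.
Proof.
apply/setP => y; apply/imsetP/idP.
  case=> x; rewrite !inE => /andP[xD /eqP E] ->.
  by rewrite rotate1 rotate2 xD E /= modnDml addnA.
rewrite inE => /andP[yD /eqP E].
exists (pj e k y.1); first by apply: pj_in.
case: y yD E => y1 y2 /= yD E.
rewrite rotateE /rotfun /=; congr pair; apply: val_inj => /=.
by rewrite modnDml -addnA -E.
Qed.

Lemma spact_rot e f : spact (rotate p f) (W e) = W (fun j => e j + f j).
Proof.
apply/setP => B; apply/imsetP/imset2P.
  case=> B0 /imset2P[D k Dd kT ->] ->.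
  by exists D k => //; rewrite rot_Bk.
case=> D k Dd kT ->.
by exists (Bk e D k); [apply/imset2P; exists D k | rewrite rot_Bk].
Qed.

Lemma modnegK x c : (x + c + (p - c %% p)) %% p = x %% p.
Proof.
rewrite -addnA -modnDmr -(modnDml c) subnKC ?modnn ?addn0 //.
by rewrite ltnW // ltn_pmod.
Qed.

Lemma Bk_inj e D D' k k' : D \in d -> D' \in d -> Bk e D k = Bk e D' k' ->
  D = D' /\ k = k'.
Proof.
move=> Dd Dd' E; have [y yD] := dne dP Dd.
have := pj_in e k yD; rewrite E inE /= => /andP[yD' /eqP E2].
split; first by rewrite -(pbE dP Dd yD) (pbE dP Dd' yD').
apply: val_inj; move/eqP: E2; rewrite eqn_modDr !modn_small //; by move/eqP.
Qed.

Lemma W_card e : #|W e| = s * p.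
Proof.
rewrite /W curry_imset2X card_in_imset; last first.
  move=> [D k] [D' k'] /setXP[Dd _] /setXP[Dd' _] /= E.
  by have [-> ->] := Bk_inj Dd Dd' E.
by rewrite cardsX (dcard dP) cardsT card_ord.
Qed.

Lemma W_part e : partition (W e) [set: P].
Proof.
apply/and3P; split.
- apply/eqP/setP => x; rewrite inE; apply/bigcupP.
  exists (Bk e (pb d x.1) (Ordinal (ltn_pmod (x.2 + (p - e x.1 %% p)) hp))).
    by apply/imset2P; exists (pb d x.1) (Ordinal (ltn_pmod (x.2 + (p - e x.1 %% p)) hp));
      rewrite ?pb_mem ?inE.
  rewrite inE pb_in //=; apply/eqP.
  by rewrite modnDml addnAC modnegK modn_small.
- apply/trivIsetP => B B' /imset2P[D k Dd _ ->] /imset2P[D' k' Dd' _ ->] ne.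
  rewrite -setI_eq0; apply/eqP/setP => x; rewrite !inE.
  apply/negP => /andP[/andP[xD /eqP E1] /andP[xD' /eqP E2]]; apply: (negP ne).
  have ED : D = D' by rewrite -(pbE dP Dd xD) (pbE dP Dd' xD').
  have Ek : k = k'.
    by apply: val_inj; move: E2; rewrite E1 => /eqP; rewrite eqn_modDr !modn_small // => /eqP.
  by rewrite ED Ek.
- apply/imset2P => -[D k Dd _ E]; have [y yD] := dne dP Dd.
  by have := pj_in e k yD; rewrite -E inE.
Qed.

Lemma W_sub e f :
  (forall D, D \in d -> exists c, forall y, y \in D -> f y = e y + c %[mod p]) ->
  W f \subset W e.
Proof.
move=> H; apply/subsetP => B /imset2P[D k Dd _ ->].
have [c Hc] := H D Dd.
apply/imset2P; exists D (Ordinal (ltn_pmod (k + c) hp)) => //.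
apply: Bk_eq => j jD /=.
by rewrite -modnDmr Hc // modnDmr modnDml addnA (addnAC k).
Qed.

Lemma W_eq e f :
  (forall D, D \in d -> exists c, forall y, y \in D -> f y = e y + c %[mod p]) ->
  W f = W e.
Proof.
move=> H; apply/eqP; rewrite eqEsubset W_sub //=; apply: W_sub => D Dd.
have [c Hc] := H D Dd; exists (p - c %% p) => y yD.
by rewrite -modnDml Hc // modnDml modnegK.
Qed.

Lemma W_fixed e : fixedR (W e).
Proof.
rewrite /fixedR sigmaE spact_rot (W_eq (e:=e)) //.
by move=> D _; exists 1.
Qed.

Lemma W_type e : has_type d (W e).
Proof.
apply/existsP; exists [ffun D => Bk e D (Ordinal hp)]; apply/andP; split.
  apply/forall_inP => D Dd; apply/forallP => j; rewrite ffunE.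
  case jD: (j \in D).
    rewrite (_ : _ :&: _ = [set pj e 0 j]) ?cards1 //.
    apply/setP => -[x1 x2]; rewrite !inE /orb /=.
    apply/andP/eqP => [[/andP[x1D /eqP E2] /eqP E1] | [-> ->]].
      have E1' : x1 = j by apply: val_inj.
      by subst x1; congr pair; apply: val_inj.
    by rewrite jD /= eqxx.
  rewrite (_ : _ :&: _ = set0) ?cards0 //.
  apply/setP => -[x1 x2]; rewrite !inE /orb /=.
  apply/negP => /andP[/andP[x1D _] /eqP E1].
  have E1' : x1 = j by apply: val_inj.
  by subst x1; rewrite x1D in jD.
apply/eqP; apply: eq_in_imset2 => D k Dd _.
rewrite ffunE sigmaX rot_Bk; apply: Bk_eq => j _ /=.
by rewrite add0n addnC.
Qed.

Lemma W_K e : W e \in Kbasis p d.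
Proof.
rewrite inE; apply/and3P; split; [|exact: W_fixed|exact: W_type].
apply/and3P; split; [exact: W_part | by rewrite W_card |].
by apply/forall_inP => B /imset2P[D k Dd _ ->]; rewrite Bk_card.
Qed.

Lemma K_W w : w \in Kbasis p d -> exists e, w = W e.
Proof.
rewrite inE => /and3P[_ _ /existsP[A /andP[/forall_inP HA /eqP Ew]]].
pose e (y : 'I_n) := if [pick z in A (pb d y) :&: orb a s p y] is Some z then val z.2 else 0.
have He y : exists z, A (pb d y) :&: orb a s p y = [set z] /\ e y = z.2.
  have := forallP (HA _ (pb_mem dP y)) y; rewrite pb_in //= => /cards1P[z Ez].
  exists z; split => //; rewrite /e; case: pickP => [z' |]; last first.
    by move/(_ z); rewrite Ez set11.
  by rewrite Ez inE => /eqP ->.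
have AD D : D \in d -> A D = Bk e D (Ordinal hp).
  move=> Dd; apply/setP => x; rewrite inE /=.
  apply/idP/andP => [xA | [xD /eqP E2]].
    have xD : x.1 \in D.
      have := forallP (HA _ Dd) x.1; case: (x.1 \in D) => //= /eqP /cards0_eq /setP /(_ x).
      by rewrite in_set0 in_setI xA /orb inE eqxx.
    split => //; have [z [Ez ez]] := He x.1.
    have : x \in [set z] by rewrite -Ez (pbE dP Dd xD) inE xA /orb inE eqxx.
    by rewrite inE => /eqP Exz; rewrite add0n ez -Exz modn_small.
  have [z [Ez ez]] := He x.1.
  have zin : z \in A (pb d x.1) :&: orb a s p x.1 by rewrite Ez set11.
  move: zin; rewrite inE (pbE dP Dd xD) /orb inE => /andP[zA /eqP z1].
  suff -> : x = z by [].
  case: x z z1 ez E2 {Ez zA xD} => x1 x2 [z1 z2] /= Ez1 ez E2.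
  have Ez1' : z1 = x1 by apply: val_inj.
  by subst z1; congr pair; apply: val_inj => /=; rewrite E2 add0n ez modn_small.
exists e; rewrite Ew; apply: eq_in_imset2 => D k Dd _.
rewrite AD // sigmaX rot_Bk; apply: Bk_eq => j _ /=.
by rewrite add0n addnC.
Qed.

Lemma W_stab f : W f = W (fun _ => 0) -> forall D, D \in d ->
  forall y y', y \in D -> y' \in D -> f y = f y' %[mod p].
Proof.
move=> E D Dd.
have : Bk f D (Ordinal hp) \in W (fun _ => 0) by rewrite -E; apply/imset2P; exists D (Ordinal hp).
case/imset2P => D' k' Dd' _ EB.
have key y : y \in D -> f y = k' %[mod p].
  move=> yD; have := pj_in f (Ordinal hp) yD; rewrite EB inE /= => /andP[_ /eqP].
  by rewrite add0n addn0 => ->.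
by move=> y y' yD y'D; rewrite key // key.
Qed.
End Part3.
Lemma spactM a s p (g h : {perm pt a s p}) w : spact (g * h)%g w = spact h (spact g w).
Proof.
rewrite /spact -imset_comp; apply: eq_imset => B /=.
by rewrite -imset_comp; apply: eq_imset => x /=; rewrite permM.
Qed.

Lemma spact1 a s p (w : {set {set pt a s p}}) : spact 1%g w = w.
Proof.
rewrite /spact (eq_imset _ (_ : _ =1 id)) ?imset_id // => B /=.
by rewrite (eq_imset _ (_ : _ =1 id)) ?imset_id // => x; rewrite perm1.
Qed.

Theorem proposition3p5 (F : fieldType) (p a s : nat) :
  prime p -> odd p -> (p \in [pchar F])%R -> a < p ->
  forall d : {set {set 'I_(a * s)}}, is_setpart_idx d ->
  exists g : {perm pt a s p},
    g \in 'N(Rgrp a s p)%g /\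
    rep_iso (Cgrp a s p) (Krep F d) (indtriv F (Egrp a s p :^ g)%g (Cgrp a s p)).
Proof.
move=> pr _ _ _ d dP; have hp := prime_gt0 pr.
set u0 := W p d (fun _ => 0).
have fixpiel (j : nat) : j < s -> spact (piel a s p j ^ gg hp dP)%g u0 = u0.
  move=> js; rewrite piel_conj // (spact_rot hp); apply: (W_eq hp) => D Dd.
  have [y0 y0D] := dne dP Dd; exists (blk d y0 == j) => y yD.
  by rewrite /blk (pbE dP Dd yD) (pbE dP Dd y0D).
pose Stab := [set c in Cgrp a s p | spact c u0 == u0].
have gS : group_set Stab.
  apply/group_setP; split; first by rewrite inE group1 spact1 eqxx.
  move=> x y; rewrite !inE => /andP[Cx /eqP ex] /andP[Cy /eqP ey].
  by rewrite groupM // spactM ex ey eqxx.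
pose StabG := Group gS.
have EsubStab : (Egrp a s p :^ gg hp dP)%g \subset StabG.
  rewrite sub_conjg /Egrp /= -[Stab]/(gval StabG) gen_subG; apply/bigcupsP => j _.
  rewrite cycle_subG mem_conjgV inE.
  by rewrite fixpiel ?ltn_ord // eqxx andbT piel_conj ?ltn_ord // rot_inC.
exists (gg hp dP); split; first exact: gg_norm.
rewrite /Krep /indtriv.
apply: (@orbit_rep_iso F _ _ (Cgrp a s p) (Egrp a s p :^ gg hp dP)%G (Kbasis p d) (@spact a s p) u0).
- apply: subset_trans EsubStab _; apply/subsetP => x; rewrite inE => /andP[].
  by [].
- by move=> g x Gg Gx; rewrite spactM.
- by move=> h /(subsetP EsubStab); rewrite inE => /andP[_ /eqP].
- move=> g Cg fixg; have [f Ef] := inC_rot Cg; subst g.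
  move: fixg; rewrite /u0 (spact_rot hp) => /(W_stab hp) Hst.
  pose c (j : 'I_s) := if [pick y | blk d y == j] is Some y then f y else 0.
  have -> : rotate p f = (\prod_(j < s) (piel a s p j ^ gg hp dP) ^+ c j)%g.
    under eq_bigr => j _ do rewrite piel_conj ?ltn_ord // rotX.
    rewrite rot_prod; apply: rot_eq => y.
    rewrite (bigD1 (Ordinal (blk_lt dP y))) //= eqxx mul1n big1 ?addn0; last first.
      move=> j /negbTE H; case: eqP => // E; move: H.
      by rewrite (_ : j = Ordinal (blk_lt dP y)) ?eqxx //; apply: val_inj; rewrite /= E.
    rewrite /c; case: pickP => [y' /eqP By' | /(_ y)]; last by rewrite eqxx.
    have y'in : y' \in pb d y by rewrite -(blk_pb dP By') pb_in.
    by have := Hst (pb d y) (pb_mem dP y) y' y y'in (pb_in dP y).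
  apply: group_prod => j _; apply: groupX; rewrite memJ_conjg; apply: mem_gen.
  by apply/bigcupP; exists j => //; exact: cycle_id.
- apply/setP => w; apply/idP/imsetP.
  + case/(K_W hp dP) => e ->; exists (rotate p e); first exact: rot_inC.
    by rewrite /u0 (spact_rot hp).
  + case=> g Cg ->; have [f ->] := inC_rot Cg; rewrite /u0 (spact_rot hp); exact: (W_K hp dP).
Qed.
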